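(* Let $\mathbf{y}\in\mathbb{R}^n$ with $\sum_i y_i=0$, and let $\mathbf{X}\in\mathbb{R}^{n\times p}$ have centered columns with $\frac1n\sum_i x_{ij}^2=1$, whose $p$ columns are partitioned into $G$ non-overlapping groups, group $g$ having $W_g$ columns forming the submatrix $\mathbf{X}_g\in\mathbb{R}^{n\times W_g}$, and assume $\frac1n\mathbf{X}_g^T\mathbf{X}_g=\mathbf{I}$ for all $g=1,\ldots,G$. For $\lambda>0$ let $$\widehat{\boldsymbol\beta}(\lambda)=\operatorname*{argmin}_{\boldsymbol\beta\in\mathbb{R}^p}\ \frac{1}{2n}\Big\|\mathbf{y}-\sum_{g=1}^G\mathbf{X}_g\boldsymbol\beta_g\Big\|^2+\lambda\sum_{g=1}^G\sqrt{W_g}\|\boldsymbol\beta_g\|,$$ where $\boldsymbol\beta=(\boldsymbol\beta_1^T,\ldots,\boldsymbol\beta_G^T)^T$ with $\boldsymbol\beta_g\in\mathbb{R}^{W_g}$. Let $\lambda_m=\max_g\frac{\|\mathbf{X}_g^T\mathbf{y}\|}{n\sqrt{W_g}}$, let $\mathbf{X}_*$ be the submatrix of a group attaining this maximum and $W_*$ its number of columns, and let $\bar{\mathbf{v}}=\mathbf{X}_*\mathbf{X}_*^T\mathbf{y}$. Then for any $\lambda\in(0,\lambda_m]$ and $g=1,\ldots,G$, we have $\widehat{\boldsymbol\beta}_g(\lambda)=\mathbf{0}$ if $$\sqrt{(\lambda+\lambda_m)^2\|\mathbf{X}_g^T\mathbf{y}\|^2-\frac{2(\lambda_m^2-\lam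bda^2)\,\mathbf{y}^T\mathbf{X}_g\mathbf{X}_g^T\bar{\mathbf{v}}}{n}+\frac{(\lambda_m-\lambda)^2\|\mathbf{X}_g^T\bar{\mathbf{v}}\|^2}{n^2}}<2n\lambda\lambda_m\sqrt{W_g}-(\lambda_m-\lambda)\sqrt{n\|\mathbf{y}\|^2-n^2\lambda_m^2W_*}.$$
   Context: $\|\cdot\|$ denotes the Euclidean norm of a vector; $\widehat{\boldsymbol\beta}_g(\lambda)$ is the block of the group lasso solution corresponding to group $g$. *)

(* Defs.v *)
From HB Require Import structures.
From mathcomp Require Import all_boot all_order all_algebra.
From mathcomp Require Import reals.
Set Implicit Arguments. Unset Strict Implicit. Unset Printing Implicit Defensive.
Import Order.TTheory GRing.Theory Num.Theory.
Local Open Scope ring_scope.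

Section GroupLasso.
Variables (R : realType) (n p G : nat).

(* Columns are partitioned into groups by grp : 'I_p -> 'I_G;
   group g consists of the columns j with grp j = g. *)

Definition gsize (grp : 'I_p -> 'I_G) (g : 'I_G) : nat :=
  #|[set j | grp j == g]|.

Definition gnorm2 (grp : 'I_p -> 'I_G) (g : 'I_G) (v : 'cV[R]_p) : R :=
  \sum_(j < p | grp j == g) v j 0 ^+ 2.

Definition vnorm2 (v : 'cV[R]_n) : R := \sum_(i < n) v i 0 ^+ 2.

(* group lasso objective
   1/(2n) ||y - sum_g X_g b_g||^2 + lam * sum_g sqrt(W_g) ||b_g|| ;
   note sum_g X_g b_g = X b since the groups partition the columns *)
Definition glasso_obj (X : 'M[R]_(n, p)) (y : 'cV[R]_n) (grp : 'I_p -> 'I_G)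
    (lam : R) (b : 'cV[R]_p) : R :=
  (2 * n%:R)^-1 * vnorm2 (y - X *m b)
  + lam * \sum_(g < G) Num.sqrt (gsize grp g)%:R * Num.sqrt (gnorm2 grp g b).

Definition is_glasso_min X y grp lam (b : 'cV[R]_p) : Prop :=
  forall b' : 'cV[R]_p, glasso_obj X y grp lam b <= glasso_obj X y grp lam b'.

Definition gratio (X : 'M[R]_(n, p)) (y : 'cV[R]_n) grp (g : 'I_G) : R :=
  Num.sqrt (gnorm2 grp g (X^T *m y)) / (n%:R * Num.sqrt (gsize grp g)%:R).

(* X_g X_g^T v = sum_{j in g} (col_j^T v) col_j *)
Definition gproj (X : 'M[R]_(n, p)) grp (g : 'I_G) (v : 'cV[R]_n) : 'cV[R]_n :=
  \sum_(j < p | grp j == g) (X^T *m v) j 0 *: col j X.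

(* y^T X_g X_g^T v = sum_{j in g} (X^T y)_j (X^T v)_j *)
Definition gcross (X : 'M[R]_(n, p)) grp (g : 'I_G) (y v : 'cV[R]_n) : R :=
  \sum_(j < p | grp j == g) (X^T *m y) j 0 * (X^T *m v) j 0.

End GroupLasso.

(* Main.v *)
From HB Require Import structures.
From mathcomp Require Import all_boot all_order all_algebra.
From mathcomp Require Import reals.
From mathcomp Require Import ring lra.
Require Import Defs.
Set Implicit Arguments. Unset Strict Implicit. Unset Printing Implicit Defensive.
Import Order.TTheory GRing.Theory Num.Theory.
Local Open Scope ring_scope.
Section Aux.
Variable R : realType.
Definition dot m (a b : 'cV[R]_m) : R := (a^T *m b) 0 0.
Lemma dotE m (a b : 'cV[R]_m) : dot a b = \sum_(i < m) a i 0 * b i 0.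
Proof. by rewrite /dot mxE; apply: eq_bigr => i _; rewrite mxE. Qed.
Lemma dotC m (a b : 'cV[R]_m) : dot a b = dot b a.
Proof. by rewrite !dotE; apply: eq_bigr => i _; rewrite mulrC. Qed.
Lemma dotDl m (a b c : 'cV[R]_m) : dot (a + b) c = dot a c + dot b c.
Proof. by rewrite !dotE -big_split; apply: eq_bigr => i _; rewrite mxE mulrDl. Qed.
Lemma dotZl m k (a c : 'cV[R]_m) : dot (k *: a) c = k * dot a c.
Proof. by rewrite !dotE mulr_sumr; apply: eq_bigr => i _; rewrite mxE mulrA. Qed.
Lemma dotNl m (a c : 'cV[R]_m) : dot (- a) c = - dot a c.
Proof. by rewrite -scaleN1r dotZl mulN1r. Qed.
Lemma dotBl m (a b c : 'cV[R]_m) : dot (a - b) c = dot a c - dot b c.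
Proof. by rewrite dotDl dotNl. Qed.
Lemma dotDr m (a b c : 'cV[R]_m) : dot c (a + b) = dot c a + dot c b.
Proof. by rewrite dotC dotDl !(dotC c). Qed.
Lemma dotZr m k (a c : 'cV[R]_m) : dot c (k *: a) = k * dot c a.
Proof. by rewrite dotC dotZl dotC. Qed.
Lemma dotBr m (a b c : 'cV[R]_m) : dot c (a - b) = dot c a - dot c b.
Proof. by rewrite dotC dotBl !(dotC c). Qed.
Lemma dotMl m k (M : 'M[R]_(k,m)) a b : dot (M *m a) b = dot a (M^T *m b).
Proof. by rewrite /dot trmx_mul mulmxA. Qed.
Lemma dot_ge0 m (a : 'cV[R]_m) : 0 <= dot a a.
Proof. by rewrite dotE; apply: sumr_ge0 => i _; rewrite -expr2 sqr_ge0. Qed.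
Lemma dot_eq0 m (a : 'cV[R]_m) : dot a a = 0 -> a = 0.
Proof.
rewrite dotE => /psumr_eq0P H; apply/matrixP => i j; rewrite ord1 mxE.
have := H (fun i _ => (ltac:(rewrite -expr2; exact: sqr_ge0))) i isT.
by move/eqP; rewrite -expr2 sqrf_eq0 => /eqP.
Qed.
Lemma CS m (a b : 'cV[R]_m) : dot a b ^+ 2 <= dot a a * dot b b.
Proof.
have := dot_ge0 (dot b b *: a - dot a b *: b).
rewrite !dotBl !dotBr !dotZl !dotZr (dotC b a).
have := dot_ge0 b; rewrite le_eqVlt => /orP [/eqP bb0|bbp] H.
  move/esym/dot_eq0: bb0 => ->; rewrite [dot a 0]dotE big1 => [|i _]; last by rewrite mxE mulr0.
  by rewrite expr0n /= mulr_ge0 // dot_ge0.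
nra.
Qed.
Definition nrm m (a : 'cV[R]_m) : R := Num.sqrt (dot a a).
Lemma nrm_ge0 m (a : 'cV[R]_m) : 0 <= nrm a.
Proof. exact: sqrtr_ge0. Qed.
Lemma sqr_nrm m (a : 'cV[R]_m) : nrm a ^+ 2 = dot a a.
Proof. by rewrite sqr_sqrtr // dot_ge0. Qed.
Lemma sqrt_le_sq (x y : R) : 0 <= y -> x <= y ^+ 2 -> Num.sqrt x <= y.
Proof. by move=> y0 H; rewrite -(ger0_norm y0) -sqrtr_sqr ler_wsqrtr. Qed.
Lemma le_of_sq (x y : R) : 0 <= y -> x ^+ 2 <= y ^+ 2 -> x <= y.
Proof.
move=> y0 H; apply: le_trans (ler_norm x) _.
by rewrite -(sqrtr_sqr x) sqrt_le_sq.
Qed.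
Lemma CSn m (a b : 'cV[R]_m) : dot a b <= nrm a * nrm b.
Proof. by apply: le_of_sq; rewrite ?mulr_ge0 ?nrm_ge0 // exprMn !sqr_nrm CS. Qed.
Lemma nrm_tri m (a b : 'cV[R]_m) : nrm (a + b) <= nrm a + nrm b.
Proof.
apply: sqrt_le_sq; first by rewrite addr_ge0 ?nrm_ge0.
rewrite dotDl !dotDr (dotC b a) sqrrD !sqr_nrm.
have := CSn a b; lra.
Qed.
Lemma nrmZ m k (a : 'cV[R]_m) : nrm (k *: a) = `|k| * nrm a.
Proof. by rewrite /nrm dotZl dotZr mulrA -expr2 sqrtrM ?sqr_ge0 // sqrtr_sqr. Qed.
Lemma nrm0 m (a : 'cV[R]_m) : nrm a = 0 -> a = 0.
Proof. by move=> H; apply: dot_eq0; rewrite -sqr_nrm H expr0n. Qed.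
End Aux.
Section Grp.
Variables (R : realType) (n p G : nat) (X : 'M[R]_(n,p)) (grp : 'I_p -> 'I_G).
Definition Dm (g : 'I_G) : 'M[R]_p := diag_mx (\row_j ((grp j == g)%:R)).
Lemma Dv g (v : 'cV[R]_p) j : (Dm g *m v) j 0 = (grp j == g)%:R * v j 0.
Proof. by rewrite /Dm mul_diag_mx !mxE. Qed.
Lemma trD g : (Dm g)^T = Dm g.
Proof. exact: tr_diag_mx. Qed.
Lemma DmDm g (v : 'cV[R]_p) : Dm g *m (Dm g *m v) = Dm g *m v.
Proof. by apply/matrixP => i j; rewrite ord1 !Dv mulrA -natrM mulnb andbb. Qed.
Lemma DmDm' (g h : 'I_G) (v : 'cV[R]_p) : g != h -> Dm g *m (Dm h *m v) = 0.
Proof.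
move=> gh; apply/matrixP => i j; rewrite ord1 !Dv mxE mulrA -natrM mulnb.
case: (boolP (grp i == g)) => [/eqP ->|_]; last by rewrite mul0r.
by rewrite (negbTE gh) mul0r.
Qed.
Lemma dotDD g (a b : 'cV[R]_p) :
  dot (Dm g *m a) (Dm g *m b) = \sum_(j < p | grp j == g) a j 0 * b j 0.
Proof.
rewrite dotE [RHS]big_mkcond; apply: eq_bigr => j _; rewrite !Dv.
by case: eqP => _; rewrite ?mul1r ?mul0r.
Qed.
Lemma dotD1 g (a b : 'cV[R]_p) : dot a (Dm g *m b) = dot (Dm g *m a) (Dm g *m b).
Proof. by rewrite [RHS]dotMl trD DmDm. Qed.
Lemma dot_part (a b : 'cV[R]_p) : dot a b = \sum_(g < G) dot (Dm g *m a) (Dm g *m b).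
Proof.
rewrite dotE (partition_big grp xpredT) //.
by apply: eq_bigr => g _; rewrite dotDD.
Qed.
Lemma gnorm2E g v : gnorm2 grp g v = dot (Dm g *m v) (Dm g *m v).
Proof. by rewrite dotDD; apply: eq_bigr => j _; rewrite expr2. Qed.
Lemma gcrossE g (y v : 'cV[R]_n) :
  gcross X grp g y v = dot (Dm g *m (X^T *m y)) (Dm g *m (X^T *m v)).
Proof. by rewrite dotDD. Qed.
Lemma gprojE g (v : 'cV[R]_n) : gproj X grp g v = X *m (Dm g *m (X^T *m v)).
Proof.
apply/matrixP => i k; rewrite ord1 /gproj summxE !mxE big_mkcond.
apply: eq_bigr => j _; rewrite Dv !mxE.
by case: eqP => _; rewrite ?mul1r ?mul0r ?mulr0 // mulrC.
Qed.
Hypothesis hXo : forall j k : 'I_p, grp j = grp k ->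
     n%:R^-1 * \sum_(i < n) X i j * X i k = (j == k)%:R.
Hypothesis hn : (0 < n)%N.
Lemma DXXD g : Dm g *m (X^T *m X) *m Dm g = n%:R *: Dm g.
Proof.
apply/matrixP => j k; rewrite /Dm mul_mx_diag mul_diag_mx !mxE.
have n0 : (n%:R : R) != 0 by rewrite pnatr_eq0 -lt0n.
case: (boolP (grp j == g)) => gj; last by rewrite !mul0r mul0rn mulr0.
case: (boolP (grp k == g)) => gk; last first.
  rewrite mulr0; case: (boolP (j == k)) => [/eqP jk|_]; last by rewrite mulr0n mulr0.
  by move: gk; rewrite -jk gj.
have := hXo (etrans (eqP gj) (esym (eqP gk))); rewrite mul1r mulr1 mulr1n.
move=> H; rewrite -H mulrA mulfV // mul1r.
by apply: eq_bigr => i _; rewrite !mxE.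
Qed.
Lemma orth g (e : 'cV[R]_p) :
  dot (X *m (Dm g *m e)) (X *m (Dm g *m e)) = n%:R * dot (Dm g *m e) (Dm g *m e).
Proof.
rewrite dotMl -{1}DmDm dotMl trD.
have -> : Dm g *m (X^T *m (X *m (Dm g *m e))) = (Dm g *m (X^T *m X) *m Dm g) *m e.
  by rewrite !mulmxA.
by rewrite DXXD -scalemxAl dotZr.
Qed.
Lemma opb g (w : 'cV[R]_n) : nrm (Dm g *m (X^T *m w)) <= Num.sqrt n%:R * nrm w.
Proof.
have E1 : dot (Dm g *m (X^T *m w)) (Dm g *m (X^T *m w))
    = dot w (X *m (Dm g *m (X^T *m w))).
  by rewrite [RHS]dotC [RHS](dotMl X) [RHS]dotC [RHS]dotD1.
have CS' := CS w (X *m (Dm g *m (X^T *m w))).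
rewrite -E1 orth in CS'.
move: CS' (dot_ge0 (Dm g *m (X^T *m w))) (dot_ge0 w).
rewrite /nrm -sqrtrM ?ler0n //.
move: (dot (Dm g *m _) _) (dot w w) => a c H a0 c0.
apply: ler_wsqrtr.
have N0 : (0 : R) <= n%:R by rewrite ler0n.
move: a0; rewrite le_eqVlt => /orP [/eqP <-|ap]; first by rewrite mulr_ge0.
nra.
Qed.
End Grp.
Lemma quad0 (R : realType) (D C : R) :
  0 <= C -> (forall h : R, `|h| <= 2^-1 -> 0 <= h * D + h ^+ 2 * C) -> D = 0.
Proof.
move=> C0 H.
pose K := 2 * (C + 1 + `|D|).
have K0 : 0 < K by rewrite /K; have := normr_ge0 D; lra.
have := H (- D / K).
have hb : `|- D / K| <= 2^-1.
  rewrite normrM normrN normfV (gtr0_norm K0) ler_pdivrMr //.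
  rewrite /K; have := normr_ge0 D; lra.
move=> /(_ hb).
have -> : - D / K * D + (- D / K) ^+ 2 * C = D ^+ 2 * (C - K) / K ^+ 2.
  by field; rewrite gt_eqF.
rewrite pmulr_lge0; last by rewrite invr_gt0 exprn_gt0.
have : C - K < 0 by rewrite /K; have := normr_ge0 D; lra.
move=> CK H2.
have : D ^+ 2 <= 0 by nra.
by rewrite -[D ^+ 2]/(D * D) => H3; apply/eqP; rewrite -sqrf_eq0 eq_le H3 sqr_ge0.
Qed.
Lemma lin0 (R : realType) (a c : R) :
  0 <= c -> (forall h : R, 0 < h -> 0 <= h * a + h ^+ 2 * c) -> 0 <= a.
Proof.
move=> c0 H; rewrite leNgt; apply/negP => a0.
have h0 : 0 < - a / (c + 1) by rewrite divr_gt0 //; lra.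
have := H _ h0.
have -> : - a / (c + 1) * a + (- a / (c + 1)) ^+ 2 * c = - a ^+ 2 / (c + 1) ^+ 2.
  by field; rewrite gt_eqF //; lra.
rewrite pmulr_lge0; last by rewrite invr_gt0 exprn_gt0 //; lra.
by nra.
Qed.
Lemma dot_exp (R : realType) m (a w : 'cV[R]_m) h :
  dot (a - h *: w) (a - h *: w) = dot a a - 2 * h * dot a w + h ^+ 2 * dot w w.
Proof. rewrite dotBl !dotBr !dotZl !dotZr (dotC w a); ring. Qed.
Section Opt.
Variables (R : realType) (n p G : nat) (X : 'M[R]_(n,p)) (y : 'cV[R]_n)
  (grp : 'I_p -> 'I_G) (lam : R) (b : 'cV[R]_p).
Hypothesis hXo : forall j k : 'I_p, grp j = grp k ->
     n%:R^-1 * \sum_(i < n) X i j * X i k = (j == k)%:R.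
Hypothesis hn : (0 < n)%N.
Hypothesis hlam : 0 < lam.
Hypothesis hb : is_glasso_min X y grp lam b.
Local Notation N := (n%:R : R).
Local Notation D := (@Dm R p G grp).
Definition sw g := Num.sqrt (gsize grp g)%:R : R.
Definition pen (v : 'cV[R]_p) := \sum_(g < G) sw g * Num.sqrt (gnorm2 grp g v).
Lemma vnorm2E (v : 'cV[R]_n) : vnorm2 v = dot v v.
Proof. by rewrite /vnorm2 dotE; apply: eq_bigr => i _; rewrite expr2. Qed.
Lemma objE v : glasso_obj X y grp lam v = (2 * N)^-1 * dot (y - X *m v) (y - X *m v) + lam * pen v.
Proof. by rewrite /glasso_obj vnorm2E. Qed.
Lemma pen_pert g e h :
  pen (b + h *: (D g *m e)) = pen b + sw g * (nrm (D g *m b + h *: (D g *m e)) - nrm (D g *m b)).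
Proof.
rewrite /pen (bigD1 g) //= [X in _ = X + _](bigD1 g) //=.
have -> : \sum_(i < G | i != g) sw i * Num.sqrt (gnorm2 grp i (b + h *: (D g *m e)))
   = \sum_(i < G | i != g) sw i * Num.sqrt (gnorm2 grp i b).
  apply: eq_bigr => i ig; rewrite !gnorm2E mulmxDr -scalemxAr DmDm' //.
  by rewrite scaler0 addr0.
rewrite !gnorm2E mulmxDr -scalemxAr DmDm /nrm.
ring.
Qed.
Definition r := y - X *m b.
Definition u := X^T *m r.
Lemma pert g e h :
  0 <= - h * dot u (D g *m e) / N + h ^+ 2 / 2 * dot (D g *m e) (D g *m e)
       + lam * sw g * (nrm (D g *m b + h *: (D g *m e)) - nrm (D g *m b)).
Proof.
have := hb (b + h *: (D g *m e)); rewrite !objE pen_pert.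
have -> : y - X *m (b + h *: (D g *m e)) = r - h *: (X *m (D g *m e)).
  by rewrite mulmxDr -scalemxAr /r opprD addrA.
have E : y - X *m b = r by [].
rewrite E dot_exp orth // (dotC r) (dotMl X) -/u (dotC (D g *m e)).
have n0 : N != 0 by rewrite pnatr_eq0 -lt0n.
set A := dot r r; set B := dot u _; set C := dot (D g *m e) _; set P := pen b.
set Q := nrm _ - nrm _.
move=> H.
have -> : - h * B / N + h ^+ 2 / 2 * C + lam * sw g * Q
  = ((2 * N)^-1 * (A - 2 * h * B + h ^+ 2 * (N * C)) + lam * (P + sw g * Q))
    - ((2 * N)^-1 * A + lam * P).
  by field.
by rewrite subr_ge0.
Qed.
Lemma n0 : N != 0. Proof. by rewrite pnatr_eq0 -lt0n. Qed.
Lemma F1 g : dot (D g *m b) (D g *m u) = N * lam * sw g * nrm (D g *m b).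
Proof.
have HD : lam * sw g * nrm (D g *m b) - dot u (D g *m b) / N = 0.
  apply: (quad0 (C := dot (D g *m b) (D g *m b) / 2)).
    by rewrite divr_ge0 ?dot_ge0.
  move=> h hh; have := pert g b h.
  have -> : D g *m b + h *: (D g *m b) = (1 + h) *: (D g *m b).
    by rewrite scalerDl scale1r.
  rewrite nrmZ ger0_norm; last first.
    by move: hh; rewrite ler_norml => /andP [h1 _]; lra.
  set Z := nrm _; set U := dot u _; set C := dot _ _.
  have -> : - h * U / N + h ^+ 2 / 2 * C + lam * sw g * ((1 + h) * Z - Z)
    = h * (lam * sw g * Z - U / N) + h ^+ 2 * (C / 2) by ring.
  done.
rewrite dotC -dotD1.
have nz := n0.
transitivity (N * (dot u (D g *m b) / N)); first by field.
by move/eqP: HD; rewrite subr_eq0 => /eqP <-; rewrite !mulrA.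
Qed.
Lemma F2 g : nrm (D g *m u) <= N * lam * sw g.
Proof.
set z := nrm (D g *m u).
have z0 : 0 <= z by exact: nrm_ge0.
have N0 : 0 < N by rewrite ltr0n.
have sw0 : 0 <= sw g by exact: sqrtr_ge0.
have H : 0 <= z * (N * lam * sw g - z) / N.
  apply: (lin0 (c := z ^+ 2 / 2)); first by rewrite divr_ge0 ?sqr_ge0.
  move=> h h0; have := pert g u h.
  have T := nrm_tri (D g *m b) (h *: (D g *m u)).
  rewrite nrmZ (gtr0_norm h0) -/z in T.
  rewrite dotD1 -sqr_nrm -/z.
  move=> P.
  have L : 0 <= lam * sw g by rewrite mulr_ge0 // ltW.
  have : 0 <= - h * z ^+ 2 / N + h ^+ 2 / 2 * z ^+ 2 + lam * sw g * (h * z).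
    apply: (le_trans P); rewrite lerD2l; apply: ler_wpM2l => //; lra.
  move=> P2.
  have -> : h * (z * (N * lam * sw g - z) / N) + h ^+ 2 * (z ^+ 2 / 2)
    = - h * z ^+ 2 / N + h ^+ 2 / 2 * z ^+ 2 + lam * sw g * (h * z).
    by field; rewrite gt_eqF.
  done.
have : 0 <= z * (N * lam * sw g - z).
  by move: H; rewrite pmulr_lge0 // invr_gt0.
case: (ltrP 0 z) => zp; last first.
  have -> : z = 0 by apply/eqP; rewrite eq_le zp z0.
  move=> _; rewrite mulr_ge0 // mulr_ge0 // ?ler0n // ltW //.
by rewrite pmulr_rge0 // subr_ge0.
Qed.
Lemma F3 g : nrm (D g *m u) < N * lam * sw g -> D g *m b = 0.
Proof.
move=> H; apply: nrm0.
have := CSn (D g *m b) (D g *m u); rewrite F1.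
have := nrm_ge0 (D g *m b).
rewrite le_eqVlt => /orP [/eqP <- //| p0] H2.
have : N * lam * sw g * nrm (D g *m b) < nrm (D g *m b) * (N * lam * sw g).
  by apply: (le_lt_trans H2); rewrite ltr_pM2l.
by rewrite mulrC ltxx.
Qed.
Lemma Aprime (lm : R) :
  (forall g, nrm (D g *m (X^T *m y)) <= N * lm * sw g) ->
  lam * dot (X *m b) y <= lm * dot (X *m b) r.
Proof.
move=> Hg; rewrite !(dotMl X) (dot_part grp b) (dot_part grp b (X^T *m r)).
rewrite !mulr_sumr; apply: ler_sum => g _.
have -> : dot (D g *m b) (D g *m (X^T *m r)) = N * lam * sw g * nrm (D g *m b) by exact: F1.
move: (ltW hlam) (nrm_ge0 (D g *m b)) (nrm_ge0 (D g *m (X^T *m y))) (Hg g)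
  (CSn (D g *m b) (D g *m (X^T *m y))).
move: (dot (D g *m b) _) (nrm (D g *m b)) (nrm (D g *m (X^T *m y))) => P a c l0 a0 c0 H1 H2.
have : lam * P <= lam * (a * c) by rewrite ler_wpM2l.
have : lam * (a * c) <= lam * (a * (N * lm * sw g)).
  by rewrite ler_wpM2l // ler_wpM2l.
move=> H3 H4; apply: (le_trans H4); apply: (le_trans H3).
by rewrite le_eqVlt; apply/orP; left; apply/eqP; ring.
Qed.
End Opt.
Lemma dot2 (R : realType) m (x z : 'cV[R]_m) a c :
  dot (a *: x - c *: z) (a *: x - c *: z)
  = a ^+ 2 * dot x x - 2 * a * c * dot x z + c ^+ 2 * dot z z.
Proof. rewrite dotBl !dotBr !dotZl !dotZr (dotC z x); ring. Qed.
Lemma dot3 (R : realType) m (x y z : 'cV[R]_m) a b c :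
  dot (a *: x - (b *: y - c *: z)) (a *: x - (b *: y - c *: z))
  = a ^+ 2 * dot x x + b ^+ 2 * dot y y + c ^+ 2 * dot z z
    - 2 * a * b * dot x y + 2 * a * c * dot x z - 2 * b * c * dot y z.
Proof. rewrite !dotBl !dotBr !dotZl !dotZr (dotC y x) (dotC z x) (dotC z y); ring. Qed.

Lemma split2 (R : realType) m k l (A : 'M[R]_(m,k)) (B : 'M[R]_(k,l)) a (x c : 'cV[R]_l) :
  a *: (A *m (B *m x)) = A *m (B *m c) + A *m (B *m (a *: x - c)).
Proof. by rewrite !mulmxBr -!scalemxAr addrC subrK. Qed.

Unset Implicit Arguments.
Set Strict Implicit.
Theorem theorem4p2 (R : realType) (n p G : nat)
  (X : 'M[R]_(n, p)) (y : 'cV[R]_n) (grp : 'I_p -> 'I_G)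
  (hn : (0 < n)%N)
  (hy : \sum_(i < n) y i 0 = 0)
  (hXc : forall j : 'I_p, \sum_(i < n) X i j = 0)
  (hXs : forall j : 'I_p, n%:R^-1 * \sum_(i < n) X i j ^+ 2 = 1)
  (hW : forall g : 'I_G, (0 < gsize grp g)%N)
  (hXo : forall j k : 'I_p, grp j = grp k ->
     n%:R^-1 * \sum_(i < n) X i j * X i k = (j == k)%:R)
  (gs : 'I_G) (hgs : forall g : 'I_G, gratio X y grp g <= gratio X y grp gs)
  (lam : R) (hlam0 : 0 < lam) (hlam1 : lam <= gratio X y grp gs)
  (g : 'I_G) :
  let lm := gratio X y grp gs in
  let vbar := gproj X grp gs y in
  Num.sqrt ((lam + lm) ^+ 2 * gnorm2 grp g (X^T *m y)
            - 2 * (lm ^+ 2 - lam ^+ 2) * gcross X grp g y vbar / n%:R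
            + (lm - lam) ^+ 2 * gnorm2 grp g (X^T *m vbar) / n%:R ^+ 2)
    < 2 * n%:R * lam * lm * Num.sqrt (gsize grp g)%:R
      - (lm - lam) * Num.sqrt (n%:R * vnorm2 y - n%:R ^+ 2 * lm ^+ 2 * (gsize grp gs)%:R) ->
  forall b : 'cV[R]_p, is_glasso_min X y grp lam b ->
  forall j : 'I_p, grp j = g -> b j 0 = 0.
Proof.
move=> lm vbar Hyp b Hmin j Hj.
have N0 : 0 < (n%:R : R) by rewrite ltr0n.
have Nn0 : (n%:R : R) != 0 by rewrite gt_eqF.
have lm0 : 0 < lm := lt_le_trans hlam0 hlam1.
have sw0 : forall g, 0 < sw R grp g by move=> g'; rewrite sqrtr_gt0 ltr0n.
set N : R := n%:R in N0 Nn0 Hyp *.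
set ys := Dm R grp gs *m (X^T *m y).
have Hg : forall g, nrm (Dm R grp g *m (X^T *m y)) <= N * lm * sw R grp g.
  move=> g'; have := hgs g'; rewrite -/lm /gratio gnorm2E ler_pdivrMr; last first.
    exact: mulr_gt0 N0 (sw0 g').
  by rewrite -/(nrm _) mulrA (mulrC lm N).
have Hlm : nrm ys = N * lm * sw R grp gs.
  have : lm = nrm ys / (N * sw R grp gs) by rewrite /lm /gratio gnorm2E.
  have := sw0 gs => s0 ->; field; by rewrite gt_eqF.
have Hv : vbar = X *m ys by rewrite /vbar gprojE.
set rr := r X y b.
have Hu : X^T *m rr = u X y b by [].
set K := dot ys ys.
have HK : K = (N * lm * sw R grp gs) ^+ 2 by rewrite -Hlm sqr_nrm.
have HE : dot y vbar = K.
  by rewrite Hv dotC (dotMl X) dotC /ys dotD1.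
have HF : dot vbar vbar = N * K by rewrite Hv orth.
have HA := Aprime hXo hn hlam0 Hmin Hg.
have HXb : X *m b = y - rr by rewrite /rr /r opprB addrC subrK.
rewrite HXb dotBl (dotBl y rr rr) (dotC rr y) in HA.
have HB : lm * dot rr vbar <= lam * K.
  have -> : dot rr vbar = dot (Dm R grp gs *m (X^T *m rr)) ys.
    by rewrite Hv dotC (dotMl X) dotC /ys dotD1.
  have F2s := F2 hXo hn hlam0 Hmin gs.
  have C1 := CSn (Dm R grp gs *m (X^T *m rr)) ys.
  rewrite Hlm in C1; rewrite HK.
  have := nrm_ge0 (Dm R grp gs *m (X^T *m rr)).
  move: (dot _ ys) C1 F2s; rewrite Hu.
  move: (nrm (Dm R grp gs *m u X y b)) => z P C1 F2s z0.
  have s0 := sw0 gs.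
  have : lm * P <= lm * (z * (N * lm * sw R grp gs)) by rewrite ler_wpM2l // ltW.
  move=> H1; apply: (le_trans H1).
  have -> : lam * (N * lm * sw R grp gs) ^+ 2 = lm * ((N * lam * sw R grp gs) * (N * lm * sw R grp gs)) by ring.
  apply: ler_wpM2l; first exact: ltW.
  apply: ler_wpM2r; last exact: F2s.
  by apply: mulr_ge0; [apply: mulr_ge0; apply: ltW|apply: ltW].
rewrite (dotC y rr) in HA.
set c3 := (lm - lam) / N.
set cc := (lam + lm) *: y - c3 *: vbar.
set w := (2 * lm) *: rr - cc.
set d := y - N^-1 *: vbar.
have Hw : dot w w <= (lm - lam) ^+ 2 * dot d d.
  rewrite /w /cc dot3 /d dot_exp HE HF.
  move: HA HB; move: (dot rr rr) (dot rr y) (dot rr vbar) (dot y y) => A B C Dy HA HB.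
  rewrite -subr_ge0.
  have -> : (lm - lam) ^+ 2 * (Dy - 2 * N^-1 * K + N^-1 ^+ 2 * (N * K)) -
   ((2 * lm) ^+ 2 * A + (lam + lm) ^+ 2 * Dy + c3 ^+ 2 * (N * K) -
    2 * (2 * lm) * (lam + lm) * B + 2 * (2 * lm) * c3 * C -
    2 * (lam + lm) * c3 * K)
   = 4 * lm * (lm * (B - A) - lam * (Dy - B)) + 4 * ((lm - lam) / N) * (lam * K - lm * C).
    by rewrite /c3; field.
  apply: addr_ge0; apply: mulr_ge0.
  - by rewrite mulr_ge0 ?ltW.
  - by rewrite subr_ge0.
  - by rewrite mulr_ge0 // divr_ge0 ?subr_ge0 // ltW.
  - by rewrite subr_ge0.
have Hwn : nrm w <= (lm - lam) * nrm d.
  apply: le_of_sq; first by rewrite mulr_ge0 ?subr_ge0 ?nrm_ge0.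
  by rewrite exprMn !sqr_nrm.
have Hd : N * vnorm2 y - N ^+ 2 * lm ^+ 2 * (gsize grp gs)%:R = N * dot d d.
  rewrite vnorm2E /d dot_exp HE HF HK.
  have <- : sw R grp gs ^+ 2 = (gsize grp gs)%:R by rewrite sqr_sqrtr // ler0n.
  by field.
rewrite Hd sqrtrM ?ltW // in Hyp.
have Hcv : Dm R grp g *m (X^T *m cc)
    = (lam + lm) *: (Dm R grp g *m (X^T *m y)) - c3 *: (Dm R grp g *m (X^T *m vbar)).
  by rewrite /cc !mulmxBr !scalemxAr.
have Hexpr : (lam + lm) ^+ 2 * gnorm2 grp g (X^T *m y)
            - 2 * (lm ^+ 2 - lam ^+ 2) * gcross X grp g y vbar / N
            + (lm - lam) ^+ 2 * gnorm2 grp g (X^T *m vbar) / N ^+ 2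
    = dot (Dm R grp g *m (X^T *m cc)) (Dm R grp g *m (X^T *m cc)).
  by rewrite Hcv dot2 !gnorm2E gcrossE /c3; field.
rewrite Hexpr -/(nrm _) in Hyp.
change (Num.sqrt (gsize grp g)%:R) with (sw R grp g) in Hyp.
change (Num.sqrt (dot d d)) with (nrm d) in Hyp.
have Hsplit : (2 * lm) *: (Dm R grp g *m (X^T *m rr))
    = Dm R grp g *m (X^T *m cc) + Dm R grp g *m (X^T *m w).
  exact: split2.
have T1 := nrm_tri (Dm R grp g *m (X^T *m cc)) (Dm R grp g *m (X^T *m w)).
have p2 : 0 < 2 * lm by rewrite mulr_gt0.
rewrite -Hsplit nrmZ (gtr0_norm p2) in T1.
have T2 := opb hXo hn g w.
have Hz : nrm (Dm R grp g *m (X^T *m rr)) < N * lam * sw R grp g.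
  have : 2 * lm * nrm (Dm R grp g *m (X^T *m rr)) < 2 * lm * (N * lam * sw R grp g).
    have sN := sqrtr_ge0 N.
    have : Num.sqrt N * nrm w <= Num.sqrt N * ((lm - lam) * nrm d) by rewrite ler_wpM2l.
    move: T1 T2 Hyp.
    move: (nrm (Dm R grp g *m (X^T *m rr))) (nrm (Dm R grp g *m (X^T *m cc)))
      (nrm (Dm R grp g *m (X^T *m w))) (nrm w) (nrm d) (Num.sqrt N) => a1 a2 a3 a4 a5 a6.
    move=> T1 T2 Hyp T3.
    have -> : 2 * lm * (N * lam * sw R grp g) = 2 * N * lam * lm * sw R grp g by ring.
    have E5 : (lm - lam) * (a6 * a5) = a6 * ((lm - lam) * a5) by ring.
    lra.
  by rewrite ltr_pM2l.
have Hb0 := F3 hXo hn Hmin Hz.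
have := congr1 (fun M : 'cV[R]_p => M j 0) Hb0.
by rewrite /= Dv Hj eqxx mul1r mxE.
Qed.
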